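(* Let $G$ be a group, $\varphi\colon A\to B$ an isomorphism between subgroups of $G$, $G^*=\langle G,t\mid t^{-1}at=\varphi(a),\ a\in A\rangle$ the HNN extension, and $H=H(G,\varphi)$. Then $H$ is the largest subgroup of $G$ with $\varphi(H)=H$, and, as subgroups of $G^*$, $H=\bigcap_{i\in\mathbb{Z}}t^{-i}Gt^{i}$. Moreover $H=\{g\in G:\ \varphi^j(g)\text{ is defined for all } j\in\mathbb{Z}\}$. If $A$ is finite, then there exists an integer $r\ge 0$ such that for every $s\ge r$ we have $H=\{g\in G:\ \varphi^j(g)\text{ is defined for } j=0,\dots,s\}$.
   Context: The core $H(G,\varphi)$ is $\bigcap_k H_k$ where $H_0=A\cap B$ and $H_{k+1}=\varphi^{-1}(H_k)\cap H_k\cap\varphi(H_k)$ (with $\varphi^{-1}(H_k)=\{a\in A:\varphi(a)\in H_k\}$). For $g\in G$ and $n\in\mathbb{N}$, ''$\varphi^n(g)$ is defined'' means $g$ lies in the domain of the $n$-fold composite of $\varphi$ regarded as a partially defined map $G\to G$, and ''$\varphi^{-n}(g)$ is defined'' means $g$ lies in the domain of the $n$-fold composite of $\varphi^{-1}\colon B\to A$ regarded as a partial map; $\varphi^0(g)$ is always defined. $G$ is regarded as a subgroup of $G^*$. *)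

(* Defs.v *)
From HB Require Import structures.
From mathcomp Require Import all_boot.
From mathcomp Require Import monoid ssrint.

Set Implicit Arguments.
Unset Strict Implicit.
Unset Printing Implicit Defensive.

(* The partial isomorphism phi : A -> B is a total function [phi : G -> G]
   of which only the values on A matter. *)

Local Open Scope group_scope.

Section Defs.
Variable G : groupType.

Definition subset_of (S T : G -> Prop) := forall x, S x -> T x.
Definition set_eq (S T : G -> Prop) := forall x, S x <-> T x.

Definition is_subgroup (S : G -> Prop) :=
  S 1 /\ (forall x y, S x -> S y -> S (x * y)) /\ (forall x, S x -> S x^-1).

Definition is_hom (K L : groupType) (f : K -> L) :=
  forall x y, f (x * y) = f x * f y.

Definition partial_iso (A B : G -> Prop) (phi : G -> G) :=
  [/\ is_subgroup A /\ is_subgroup B,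
      (forall a, A a -> B (phi a)),
      (forall a a', A a -> A a' -> phi a = phi a' -> a = a'),
      (forall b, B b -> exists2 a, A a & phi a = b) &
      (forall a a', A a -> A a' -> phi (a * a') = phi a * phi a')].

Definition image_of (phi : G -> G) (S : G -> Prop) : G -> Prop :=
  fun y => exists2 s, S s & y = phi s.

Definition preimage_of (A : G -> Prop) (phi : G -> G) (S : G -> Prop) : G -> Prop :=
  fun a => A a /\ S (phi a).

Fixpoint core_k (A B : G -> Prop) (phi : G -> G) (k : nat) : G -> Prop :=
  match k with
  | 0 => fun g => A g /\ B g
  | k'.+1 => fun g =>
      [/\ preimage_of A phi (core_k A B phi k') g,
          core_k A B phi k' g &
          image_of phi (core_k A B phi k') g]
  end.

Definition core (A B : G -> Prop) (phi : G -> G) : G -> Prop :=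
  fun g => forall k, core_k A B phi k g.

Fixpoint fwd_defined (A : G -> Prop) (phi : G -> G) (n : nat) (g : G) : Prop :=
  match n with
  | 0 => True
  | n'.+1 => A g /\ fwd_defined A phi n' (phi g)
  end.

Fixpoint bwd_defined (A B : G -> Prop) (phi : G -> G) (n : nat) (g : G) : Prop :=
  match n with
  | 0 => True
  | n'.+1 => B g /\ exists2 a, A a /\ phi a = g & bwd_defined A B phi n' a
  end.

Definition iter_defined (A B : G -> Prop) (phi : G -> G) (j : int) (g : G) : Prop :=
  match j with
  | Posz n => fwd_defined A phi n g
  | Negz n => bwd_defined A B phi n.+1 g
  end.

Definition finite_pred (S : G -> Prop) := exists s : seq G, forall x, S x -> x \in s.

End Defs.

Definition zpow (K : groupType) (t : K) (i : int) : K :=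
  match i with
  | Posz n => t ^+ n
  | Negz n => (t ^+ n.+1)^-1
  end.

(* (Gs, iota, t) is the HNN extension  < G, t | t^-1 a t = phi a, a in A >,
   characterised by its universal property. *)
Definition is_HNN_extension (G : groupType) (A : G -> Prop) (phi : G -> G)
    (Gs : groupType) (iota : G -> Gs) (t : Gs) : Prop :=
  [/\ is_hom iota,
      (forall a, A a -> t^-1 * iota a * t = iota (phi a)) &
      (forall (L : groupType) (f : G -> L) (u : L),
          is_hom f -> (forall a, A a -> u^-1 * f a * u = f (phi a)) ->
          exists F : Gs -> L,
            [/\ is_hom F, (forall g, F (iota g) = f g), F t = u &
                forall F' : Gs -> L, is_hom F' -> (forall g, F' (iota g) = f g) ->
                  F' t = u -> forall x, F' x = F x])].

(* Main.v *)
From HB Require Import structures.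
From mathcomp Require Import all_boot monoid ssrint boolp zify.
Require Import Defs.
Set Implicit Arguments. Unset Strict Implicit. Unset Printing Implicit Defensive.
Local Open Scope group_scope.

Definition eps (T : Type) (d : T) (P : T -> Prop) : T :=
  match pselect (exists x, P x) with
  | left h => proj1_sig (cid h)
  | right _ => d end.

Lemma epsP (T : Type) (d : T) (P : T -> Prop) : (exists x, P x) -> P (eps d P).
Proof. rewrite /eps; case: pselect => // h _; exact: proj2_sig (cid h). Qed.

Section Sub.
Variable G : groupType.
Variable S : G -> Prop.
Hypothesis HS : is_subgroup S.

Lemma sub1 : S 1. Proof. by case: HS. Qed.
Lemma subM x y : S x -> S y -> S (x * y). Proof. by case: HS => _ []; auto. Qed.
Lemma subV x : S x -> S x^-1. Proof. by case: HS => _ []; auto. Qed.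
Lemma subMl a g : S a -> S (a * g) <-> S g.
Proof.
move=> Sa; split=> h; last exact: subM.
by rewrite -(mulKg a g); apply: subM => //; apply: subV.
Qed.

Definition rep (g : G) : G := eps 1 (fun c => (S g -> c = 1) /\ S (g * c^-1)).

Lemma rep_spec g : (S g -> rep g = 1) /\ S (g * (rep g)^-1).
Proof.
apply: (@epsP G 1 (fun c => (S g -> c = 1) /\ S (g * c^-1))); case: (pselect (S g)) => h.
  by exists 1; split => //; rewrite invg1 mulg1.
by exists g; split => //; rewrite mulgV; exact: sub1.
Qed.

Lemma rep_mulL a g : S a -> rep (a * g) = rep g.
Proof.
move=> Sa; rewrite /rep; f_equal; apply: funext => c; apply: propext.
rewrite -mulgA; have h1 := subMl g Sa; have h2 := subMl (g * c^-1) Sa; tauto.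
Qed.

Lemma rep1E g : rep g = 1 <-> S g.
Proof.
split; last by case: (rep_spec g) => h _ /h.
by move=> e; case: (rep_spec g); rewrite e invg1 mulg1.
Qed.

Lemma rep_rep g : rep (rep g) = rep g.
Proof.
case: (rep_spec g) => _ h.
have E : rep g = (g * (rep g)^-1)^-1 * g by rewrite invgM invgK -mulgA mulVg mulg1.
by rewrite {1}E rep_mulL //; apply: subV.
Qed.

End Sub.
Record bij (X : Type) := Bij { bf : X -> X; bg : X -> X;
  bfK : cancel bf bg; bgK : cancel bg bf }.

Lemma bij_eq (X : Type) (p q : bij X) : bf p = bf q -> p = q.
Proof.
case: p => f g fK gK; case: q => f' g' fK' gK' /= E; subst f'.
have E : g = g'.
  apply: funext => y; by rewrite -{1}(gK' y) fK.
subst g'. by rewrite (Prop_irrelevance fK fK') (Prop_irrelevance gK gK').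
Qed.

HB.instance Definition _ (X : Type) := gen_eqMixin (bij X).
HB.instance Definition _ (X : Type) := gen_choiceMixin (bij X).

Section BijGroup.
Variable X : Type.
Definition bone : bij X := @Bij X id id (fun _ => erefl) (fun _ => erefl).
Definition binv (p : bij X) : bij X := Bij (bgK p) (bfK p).
Definition bmul (p q : bij X) : bij X.
refine (@Bij X (bf p \o bf q) (bg q \o bg p) _ _).
- by move=> x /=; rewrite bfK bfK.
- by move=> x /=; rewrite bgK bgK.
Defined.
Lemma bmulA : associative bmul. Proof. by move=> p q r; apply: bij_eq. Qed.
Lemma bmul1 : left_id bone bmul. Proof. by move=> p; apply: bij_eq. Qed.
Lemma bmulr1 : right_id bone bmul. Proof. by move=> p; apply: bij_eq. Qed.
Lemma bmulV : left_inverse bone binv bmul.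
Proof. move=> p; apply: bij_eq; apply: funext => x /=; exact: bfK. Qed.
Lemma bmulrV : right_inverse bone binv bmul.
Proof. move=> p; apply: bij_eq; apply: funext => x /=; exact: bgK. Qed.
End BijGroup.

HB.instance Definition _ (X : Type) :=
  isGroup.Build (bij X) (@bmulA X) (@bmul1 X) (@bmulr1 X) (@bmulV X) (@bmulrV X).

Lemma bf_mul (X : Type) (p q : bij X) x : bf (p * q) x = bf p (bf q x).
Proof. by []. Qed.
Lemma bf_inv (X : Type) (p : bij X) x : bf (p^-1) x = bg p x.
Proof. by []. Qed.

Section Main.
Variable G : groupType.
Variables A B : G -> Prop.
Variable phi : G -> G.
Hypothesis Hiso : partial_iso A B phi.

Lemma sgA : is_subgroup A. Proof. by case: Hiso => [[]] *. Qed.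
Lemma sgB : is_subgroup B. Proof. by case: Hiso => [[]] *. Qed.
Lemma phiAB a : A a -> B (phi a). Proof. by case: Hiso => _ h _ _ _; apply: h. Qed.
Lemma phi_inj a a' : A a -> A a' -> phi a = phi a' -> a = a'.
Proof. by case: Hiso => _ _ h _ _; apply: h. Qed.
Lemma phi_surj b : B b -> exists2 a, A a & phi a = b.
Proof. by case: Hiso => _ _ _ h _; apply: h. Qed.
Lemma phiM a a' : A a -> A a' -> phi (a * a') = phi a * phi a'.
Proof. by case: Hiso => _ _ _ _ h; apply: h. Qed.
Lemma phi1 : phi 1 = 1.
Proof.
have h := phiM (sub1 sgA) (sub1 sgA); rewrite mulg1 in h.
by apply: (@mulgI _ (phi 1)); rewrite mulg1 -h.
Qed.
Lemma phiV a : A a -> phi a^-1 = (phi a)^-1.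
Proof.
move=> Aa; have h := phiM (subV sgA Aa) Aa; rewrite mulVg phi1 in h.
by apply: (@mulIg _ (phi a)); rewrite mulVg -h.
Qed.

Definition psi (b : G) : G := eps 1 (fun a => A a /\ phi a = b).
Lemma psi_spec b : B b -> A (psi b) /\ phi (psi b) = b.
Proof.
move=> Bb; apply: (@epsP G 1 (fun a => A a /\ phi a = b)).
by case: (phi_surj Bb) => a Aa <-; exists a.
Qed.
Lemma psi_phi a : A a -> psi (phi a) = a.
Proof.
move=> Aa; case: (psi_spec (phiAB Aa)) => h1 h2; exact: phi_inj h1 Aa h2.
Qed.

Definition Se (e : bool) := if e then B else A.
Definition mm (e : bool) := if e then psi else phi.
Lemma sgSe e : is_subgroup (Se e). Proof. case: e; [exact: sgB | exact: sgA]. Qed.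
Lemma mm_in e s : Se e s -> Se (~~ e) (mm e s).
Proof. case: e => /= h; [exact: (psi_spec h).1 | exact: phiAB]. Qed.
Lemma mmK e s : Se e s -> mm (~~ e) (mm e s) = s.
Proof. case: e => /= h; [exact: (psi_spec h).2 | exact: psi_phi]. Qed.

Definition W := (G * seq (bool * G))%type.

Definition mv (e : bool) (x : W) : W :=
  let c := rep (Se e) x.1 in let b := x.1 * c^-1 in
  match x.2 with
  | (e', c1) :: w' => if (c == 1) && (e' == ~~ e) then (mm e b * c1, w')
                      else (mm e b, (e, c) :: x.2)
  | [::] => (mm e b, (e, c) :: x.2)
  end.

Fixpoint valid (w : seq (bool * G)) : Prop :=
  match w with
  | [::] => True
  | (e, c) :: w' => [/\ rep (Se e) c = c, valid w' &
        (c = 1 -> forall e2 c2 w2, w' = (e2, c2) :: w2 -> e2 = e)]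
  end.

Lemma mv_valid e x : valid x.2 -> valid (mv e x).2.
Proof.
have rr g : rep (Se e) (rep (Se e) g) = rep (Se e) g by apply: rep_rep; exact: sgSe.
case: x => g0 w /= vw.
case: w vw => [|[e' c1] w'] vw; rewrite /mv /=.
  by split => // _ ? ? ?.
case: ifP => [_|np]; first by case: vw.
split => //.
move=> c1' e2 c2 w2 [<- _ _]; move: np; rewrite c1' eqxx /=.
by case: (e') (e) => [] [].
Qed.

Lemma mvK e x : valid x.2 -> mv (~~ e) (mv e x) = x.
Proof.
case: x => g0 w /= vw.
have Sb : Se e (g0 * (rep (Se e) g0)^-1) := (rep_spec (sgSe e) g0).2.
have Sm := mm_in Sb.
have r1 : rep (Se (~~ e)) (mm e (g0 * (rep (Se e) g0)^-1)) = 1.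
  by apply/rep1E => //; exact: sgSe.
have nonp : forall w, mv (~~ e) (mm e (g0 * (rep (Se e) g0)^-1), (e, rep (Se e) g0) :: w)
   = (g0, w).
  move=> w0; rewrite /mv /= r1 eqxx negbK eqxx /= invg1 mulg1 (mmK Sb).
  by rewrite mulgVK.
case: w vw => [|[e' c1] w'] vw; rewrite [mv e _]/mv /=.
  exact: nonp.
case: ifP => [/andP[/eqP c0 /eqP ee] | np]; last exact: nonp.
subst e'; case: vw => rc1 vw' ad.
rewrite /mv /= rep_mulL ?rc1 //; last exact: sgSe.
rewrite mulgK (mmK Sb) c0 invg1 mulg1.
case: w' vw' ad => [|[e2 c2] w2] // _ ad.
case: ifP => // /andP[/eqP c10 /eqP ee].
have := ad c10 _ _ _ erefl; rewrite ee negbK.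
by case: (e).
Qed.
Definition act (g : G) (x : W) : W := (g * x.1, x.2).

Lemma mv_rel a x : A a -> valid x.2 ->
  mv false (act a (mv true x)) = act (phi a) x.
Proof.
move=> Aa; case: x => g0 w /= vw.
have Sb : B (g0 * (rep B g0)^-1) := (rep_spec sgB g0).2.
have Sm := (psi_spec Sb).1.
have Sam : A (a * psi (g0 * (rep B g0)^-1)) by apply: (subM sgA).
have pm : phi (a * psi (g0 * (rep B g0)^-1)) = phi a * (g0 * (rep B g0)^-1).
  by rewrite phiM // (psi_spec Sb).2.
have nonp : forall w, mv false (act a (psi (g0 * (rep B g0)^-1), (true, rep B g0) :: w))
   = (phi a * g0, w).
  move=> w0; rewrite /mv /act /= (rep1E sgA _).2 // eqxx /= invg1 mulg1 pm.
  by rewrite -mulgA mulgVK.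
rewrite /act /=.
case: w vw => [|[e' c1] w'] vw; rewrite [mv true _]/mv /=.
  exact: nonp.
case: ifP => [/andP[/eqP c0 /eqP ee] | np]; last exact: nonp.
subst e'; case: vw => rc1 vw' ad.
rewrite /mv /= mulgA rep_mulL ?rc1 //; last exact: sgA.
rewrite mulgK pm c0 invg1 !mulg1.
case: w' vw' ad => [|[e2 c2] w2] // _ ad.
case: ifP => // /andP[/eqP c10 /eqP ee].
by have := ad c10 _ _ _ erefl; rewrite ee.
Qed.

Lemma mv_britton g g' : mv false (act g' (mv true (1, [::]))) = act g (1, [::]) -> A g'.
Proof.
have Sb : B (1 * (rep B 1)^-1) := (rep_spec sgB 1).2.
have Sm := (psi_spec Sb).1.
rewrite /mv /act /=.
case: eqP => [/(rep1E sgA) h _ | _ //].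
have := subM sgA h (subV sgA Sm).
by rewrite mulgK.
Qed.

Definition X := {x : W | valid x.2}.
Lemma X_eq (x y : X) : sval x = sval y -> x = y.
Proof.
case: x => x hx; case: y => y hy /= E; subst y.
by rewrite (Prop_irrelevance hx hy).
Qed.
Definition mvX e (x : X) : X := exist _ (mv e (sval x)) (mv_valid e (proj2_sig x)).
Definition actX g (x : X) : X :=
  exist (fun x : W => valid x.2) (act g (sval x)) (proj2_sig x).
Lemma mvX_tf : cancel (mvX true) (mvX false).
Proof. by move=> x; apply: X_eq => /=; apply: (mvK true (proj2_sig x)). Qed.
Lemma mvX_ft : cancel (mvX false) (mvX true).
Proof. by move=> x; apply: X_eq => /=; apply: (mvK false (proj2_sig x)). Qed.
Lemma actXK g : cancel (actX g) (actX g^-1).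
Proof. by move=> x; apply: X_eq; rewrite /= /act /= mulKg; case: (sval x). Qed.
Lemma actXKV g : cancel (actX g^-1) (actX g).
Proof. by move=> x; apply: X_eq; rewrite /= /act /= mulVKg; case: (sval x). Qed.
Definition fX (g : G) : bij X := Bij (actXK g) (actXKV g).
Definition uX : bij X := Bij mvX_tf mvX_ft.

Lemma fX_hom : is_hom fX.
Proof.
move=> x y; apply: bij_eq; apply: funext => z; apply: X_eq.
by rewrite /= /act /= mulgA.
Qed.

Lemma fX_rel a : A a -> uX^-1 * fX a * uX = fX (phi a).
Proof.
move=> Aa; apply: bij_eq; apply: funext => z; apply: X_eq.
exact: (mv_rel Aa (proj2_sig z)).
Qed.

Lemma hom1 (K L : groupType) (F : K -> L) : is_hom F -> F 1 = 1.
Proof.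
move=> hF; have h := hF 1 1; rewrite mulg1 in h.
by apply: (@mulgI _ (F 1)); rewrite mulg1 -h.
Qed.
Lemma homV (K L : groupType) (F : K -> L) x : is_hom F -> F x^-1 = (F x)^-1.
Proof.
move=> hF; have h := hF x^-1 x; rewrite mulVg (hom1 hF) in h.
by apply: (@mulIg _ (F x)); rewrite mulVg -h.
Qed.

Lemma HNN_britton (Gs : groupType) (iota : G -> Gs) (t : Gs) :
  is_HNN_extension A phi iota t ->
  (forall g g', iota g = iota g' -> g = g') /\
  (forall g g', iota g = t^-1 * iota g' * t -> A g' /\ g = phi g').
Proof.
case=> hi rel univ.
case: (univ _ fX uX fX_hom fX_rel) => F [hF Fi Ft _].
pose x0 : X := exist (fun x : W => valid x.2) (1, [::]) I.
have inj g g' : iota g = iota g' -> g = g'.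
  move=> E; have : bf (fX g) x0 = bf (fX g') x0 by rewrite -!Fi E.
  by move/(congr1 sval) => /= [] ; rewrite !mulg1.
split=> // g g' E.
have E2 : fX g = uX^-1 * fX g' * uX.
  by rewrite -Fi E !hF homV // Fi Ft.
have Ag' : A g'.
  apply: (mv_britton (g := g)).
  by have := congr1 (fun p => sval (bf p x0)) E2.
split=> //; apply: inj; rewrite E; exact: rel.
Qed.


Notation Hk := (core_k A B phi).
Notation HH := (core A B phi).

Lemma Hk_AB k g : Hk k g -> A g /\ B g.
Proof. elim: k g => [//|k IH] g /= [_ h _]; exact: IH. Qed.

Lemma Hk_sub k : is_subgroup (Hk k).
Proof.
elim: k => [|k [h1 [hM hV]]] /=.
  split; first by split; apply: sub1; [exact: sgA | exact: sgB].
  split=> [x y [? ?] [? ?]|x [? ?]]; split.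
  - by apply: (subM sgA).
  - by apply: (subM sgB).
  - by apply: (subV sgA).
  - by apply: (subV sgB).
have HA x : Hk k x -> A x by move/Hk_AB => [].
split; first split.
- by split; [exact: (sub1 sgA) | rewrite phi1].
- exact: h1.
- by exists 1; rewrite ?phi1.
split.
- move=> x y [[Ax hx] kx [s ks E]] [[Ay hy] ky [s' ks' E']] /=; split.
  + by split; [apply: (subM sgA) | rewrite phiM //; apply: hM].
  + by apply: hM.
  + by exists (s * s'); [apply: hM | rewrite phiM ?E ?E' //; apply: HA].
- move=> x [[Ax hx] kx [s ks E]] /=; split.
  + by split; [apply: (subV sgA) | rewrite phiV //; apply: hV].
  + by apply: hV.
  + by exists s^-1; [apply: hV | rewrite phiV ?E //; apply: HA].
Qed.

Lemma H_sub : is_subgroup HH.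
Proof.
split; first by move=> k; case: (Hk_sub k).
split=> [x y hx hy k|x hx k]; have [_ [hM hV]] := Hk_sub k; auto.
Qed.

Lemma H_A g : HH g -> A g. Proof. by move/(_ 0%N) => []. Qed.
Lemma H_B g : HH g -> B g. Proof. by move/(_ 0%N) => []. Qed.

Lemma H_phi g : HH g -> HH (phi g).
Proof. by move=> h k; case: (h k.+1) => [[]]. Qed.

Lemma H_pre g : HH g -> exists2 a, HH a & phi a = g.
Proof.
move=> h; case: (h 1%N) => _ _ [a a0 ea].
have Aa : A a by case: a0.
exists a => // k; case: (h k.+1) => _ _ [a' a'k ea'].
have Aa' : A a' by case: (Hk_AB a'k).
by rewrite (@phi_inj a a') // -ea -ea'.
Qed.

Lemma H_img : set_eq (image_of phi HH) HH.
Proof.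
move=> g; split; first by case=> s hs ->; exact: H_phi.
by move/H_pre => [a ha <-]; exists a.
Qed.

Lemma H_max (K : G -> Prop) : is_subgroup K -> subset_of K A ->
  set_eq (image_of phi K) K -> subset_of K HH.
Proof.
move=> _ KA KK g Kg k; elim: k g Kg => [|k IH] g Kg /=.
  split; first exact: KA.
  by case: ((KK g).2 Kg) => s Ks ->; apply: phiAB; apply: KA.
split.
- split; first exact: KA.
  by apply: IH; apply: (KK _).1; exists g.
- exact: IH.
- by case: ((KK g).2 Kg) => s Ks ->; exists s => //; apply: IH.
Qed.

Lemma fwd_of (P : G -> Prop) : (forall x, P x -> A x /\ P (phi x)) ->
  forall n x, P x -> fwd_defined A phi n x.
Proof. move=> hP; elim=> [//|n IH] x /hP [Ax Px] /=; split=> //; exact: IH. Qed.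

Lemma bwd_of (P : G -> Prop) :
  (forall x, P x -> B x /\ exists2 a, A a /\ phi a = x & P a) ->
  forall n x, P x -> bwd_defined A B phi n x.
Proof.
move=> hP; elim=> [//|n IH] x /hP [Bx [a ha Pa]] /=; split=> //.
by exists a => //; apply: IH.
Qed.

Lemma H_iter g : HH g <-> forall j : int, iter_defined A B phi j g.
Proof.
split.
  move=> h [n|n].
    by apply: (fwd_of (P := HH)) h => x hx; split; [exact: H_A | exact: H_phi].
  apply: (bwd_of (P := HH)) h => x hx; split; first exact: H_B.
  by case: (H_pre hx) => a ha ea; exists a => //; split=> //; exact: H_A.
pose D x := forall j : int, iter_defined A B phi j x.
have DA x : D x -> A x by move/(_ (Posz 1)) => /= [].
have DB x : D x -> B x by move/(_ (Negz 0)) => /= [].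
have Dphi x : D x -> D (phi x).
  move=> dx [n|n] /=.
    by have := dx (Posz n.+1) => /= [[]].
  split; first by apply: phiAB; apply: DA.
  exists x; first by split=> //; apply: DA.
  by case: n => [//|n]; apply: (dx (Negz n)).
have Dpre x : D x -> exists2 a, A a /\ phi a = x & D a.
  move=> dx; have := dx (Negz 0) => /= [[_ [a [Aa ea] _]]].
  exists a => //; case=> [[|n]|n] /=.
  - by [].
  - by split=> //; rewrite ea; apply: (dx (Posz n)).
  - have := dx (Negz n.+1) => /= [[Bx [a' [Aa' ea'] ba']]].
    by rewrite (@phi_inj a a') // ea ea'.
move=> dg k; elim: k g dg => [|k IH] g dg /=.
  by split; [apply: DA | apply: DB].
split.
- by split; [apply: DA | apply: IH; apply: Dphi].
- exact: IH.
- by case: (Dpre g dg) => a [Aa ea] da; exists a => //; apply: IH.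
Qed.

Lemma fwd_iter n x : fwd_defined A phi n x <-> forall k, (k < n)%N -> A (iter k phi x).
Proof.
elim: n x => [|n IH] x /=; first by split=> // _ [].
rewrite IH; split.
  by move=> [Ax h] [|k] //= kn; rewrite -iterS iterSr; apply: h.
move=> h; split; first exact: (h 0%N).
by move=> k kn; rewrite -iterSr; apply: h.
Qed.

Lemma H_fin : finite_pred A -> exists r : nat, forall s : nat, (r <= s)%N ->
  forall g, HH g <-> forall j : nat, (j <= s)%N -> fwd_defined A phi j g.
Proof.
case=> s0 hs0; exists (size s0).+1 => s rs g; split.
  by move=> hg j _; apply: ((H_iter g).1 hg (Posz j)).
move=> hj; set r := (size s0).+1.
have hA : forall k, (k < r)%N -> A (iter k phi g).
  by apply/fwd_iter; apply: hj.
have nu : ~~ uniq (traject phi g r).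
  apply/negP => u; have := uniq_leq_size u.
  have sub : {subset traject phi g r <= s0}.
    by move=> y /trajectP [k kr ->]; apply: hs0; apply: hA.
  by move/(_ s0 sub); rewrite size_traject /r ltnn.
case/(uniqPn g): nu => i [j [ij]]; rewrite size_traject => jr.
rewrite !nth_traject //; last by apply: ltn_trans jr.
move=> eij.
have canc : forall i d, (i + d < r)%N -> iter i phi g = iter (i + d) phi g -> g = iter d phi g.
  elim=> [|i' IH] d idr; first by [].
  rewrite addSn !iterS => e; apply: IH; first by apply: ltn_trans idr.
  apply: phi_inj e; apply: hA; [apply: leq_ltn_trans idr; lia | lia].
set d := (j - i)%N.
have dpos : (0 < d)%N by rewrite /d; lia.
have dr : (d < r)%N by rewrite /d; lia.
have gd : iter d phi g = g.
  by symmetry; apply: (canc i) => //; rewrite /d; [lia | rewrite subnKC // ltnW].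
pose P x := exists2 k, (k < d)%N & x = iter k phi g.
have PA x : P x -> A x by case=> k kd ->; apply: hA; lia.
apply/H_iter => -[n|n].
  apply: (fwd_of (P := P)); last by exists 0%N.
  move=> x Px; split; first exact: PA.
  case: Px => k kd ->; rewrite -iterS.
  case: (ltnP k.+1 d) => h; first by exists k.+1.
  by exists 0%N => //; have -> : k.+1 = d by lia.
apply: (bwd_of (P := P)); last by exists 0%N.
move=> x [k kd ->].
have [a [Aa ea] Pa] : exists2 a, A a /\ phi a = iter k phi g & P a.
  case: k kd => [|k] kd.
    exists (iter d.-1 phi g); last by exists d.-1 => //; lia.
    split; first by apply: hA; lia.
    by rewrite -iterS prednK.
  exists (iter k phi g); last by exists k => //; lia.
  by split; [apply: hA; lia | rewrite iterS].
split; last by exists a.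
by rewrite -ea; apply: phiAB.
Qed.

Lemma canc_lr (K : groupType) (p q a b : K) : p * a * q = p * b * q -> a = b.
Proof. by move/mulIg/mulgI. Qed.

Lemma H_iterH n h : HH h -> HH (iter n phi h).
Proof. by elim: n => [//|n IH] hh /=; apply: H_phi; apply: IH. Qed.

Lemma H_preiter n h : HH h -> exists2 g, HH g & iter n phi g = h.
Proof.
elim: n h => [|n IH] h hh; first by exists h.
case: (H_pre hh) => a ha <-; case: (IH a ha) => g hg <-.
by exists g => //; rewrite -iterS iterSr.
Qed.

Lemma part2 (Gs : groupType) (iota : G -> Gs) (t : Gs) :
  is_HNN_extension A phi iota t ->
  forall x : Gs, (exists2 h, HH h & x = iota h) <->
         forall i : int, exists g : G, x = (zpow t i)^-1 * iota g * zpow t i.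
Proof.
move=> hnn; have [inj br] := HNN_britton hnn.
case: hnn => hi rel _.
have iota_iter : forall n h, HH h -> iota (iter n phi h) = (t ^+ n)^-1 * iota h * t ^+ n.
  elim=> [|n IH] h hh; first by rewrite /= expg0 invg1 mul1g mulg1.
  rewrite /= -rel; last by apply: H_A; apply: H_iterH.
  by rewrite IH // expgSr invgM !mulgA.
move=> x; split.
  case=> h hh -> [n|n] /=.
    by case: (H_preiter n hh) => g hg <-; exists g; rewrite iota_iter.
  exists (iter n.+1 phi h).
  by rewrite invgK iota_iter // !mulgA mulgV mul1g mulgK.
move=> hx.
pose gp n := proj1_sig (cid (hx (Posz n))).
have gpE n : x = (t ^+ n)^-1 * iota (gp n) * t ^+ n := proj2_sig (cid (hx (Posz n))).
pose gn n := proj1_sig (cid (hx (Negz n))).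
have gnE n : x = t ^+ n.+1 * iota (gn n) * (t ^+ n.+1)^-1.
  have := proj2_sig (cid (hx (Negz n))); rewrite -/(gn n) /= => ->.
  by rewrite invgK.
have x0 : x = iota (gp 0%N) by rewrite {1}(gpE 0%N) expg0 invg1 mul1g mulg1.
exists (gp 0%N) => //.
apply/H_iter => -[n|n].
  pose k m := if m is m'.+1 then gn m' else gp 0%N.
  have hk m : A (k m) /\ k m.+1 = phi (k m).
    case: m => [|m] /=.
      apply: br; apply: (@canc_lr _ t t^-1).
      rewrite !mulgA mulgV mul1g mulgK -x0.
      by rewrite (gnE 0%N) expg1.
    apply: br; apply: (@canc_lr _ (t ^+ m.+2) (t ^+ m.+2)^-1).
    rewrite -(gnE m.+1) (gnE m) [t ^+ m.+2]expgSr invgM !mulgA.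
    by rewrite !mulgK.
  apply: (fwd_of (P := fun y => exists m, y = k m)); last by exists 0%N.
  by move=> y [m ->]; split; [case: (hk m) | exists m.+1; case: (hk m)].
have hp m : A (gp m.+1) /\ gp m = phi (gp m.+1).
  apply: br; apply: (@canc_lr _ (t ^+ m)^-1 (t ^+ m)).
  by rewrite -(gpE m) (gpE m.+1) expgS invgM !mulgA.
apply: (bwd_of (P := fun y => exists m, y = gp m)); last by exists 0%N.
move=> y [m ->]; case: (hp m) => Am em; split.
  by rewrite em; apply: phiAB.
by exists (gp m.+1); [split | exists m.+1].
Qed.
End Main.

Theorem lemma2p1 (G : groupType) (A B : G -> Prop) (phi : G -> G)
    (Hiso : partial_iso A B phi)
    (Gs : groupType) (iota : G -> Gs) (t : Gs)
    (HNN : is_HNN_extension A phi iota t) :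
  let H := core A B phi in
  [/\ (* H is the largest subgroup of G with phi(H) = H *)
      (is_subgroup H /\ subset_of H A /\ set_eq (image_of phi H) H /\
       forall K : G -> Prop, is_subgroup K -> subset_of K A ->
         set_eq (image_of phi K) K -> subset_of K H),
      (* in G*, H = intersection over i in Z of t^-i G t^i *)
      (forall x : Gs, (exists2 h, H h & x = iota h) <->
         forall i : int, exists g : G, x = (zpow t i)^-1 * iota g * zpow t i),
      (* H = { g : phi^j(g) defined for all j in Z } *)
      (forall g, H g <-> forall j : int, iter_defined A B phi j g) &
      (* A finite => stabilisation *)
      (finite_pred A -> exists r : nat, forall s : nat, (r <= s)%N ->
         forall g, H g <-> forall j : nat, (j <= s)%N -> fwd_defined A phi j g)].
Proof.
rewrite /=; split.
- split; first by apply: H_sub.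
  split; first by move=> x; apply: H_A.
  split; first by apply: H_img.
  by apply: H_max.
- by apply: part2.
- by apply: H_iter.
- by apply: H_fin.
Qed.
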